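(* Let $p$ be a prime and let $(\mathbb{K},|\cdot|_{\mathbb{K}})$ be a valued field with $\mathbb{Q}_p\subseteq\mathbb{K}$ such that the inclusion $\mathbb{Q}_p\hookrightarrow\mathbb{K}$ is continuous. Let $f:\mathbb{Q}_p\to\mathbb{K}$ be continuous, $n\ge0$, and $N\in\mathbb{N}$. If $\Delta_{p^N}^{n+1}f(x)=0$ for all $x\in\mathbb{Q}_p$, then for each $a\in\mathbb{Q}_p$ there exist constants $a_0,\dots,a_n\in\mathbb{K}$ such that $f(x)=a_0+a_1x+\cdots+a_nx^n$ for all $x\in a+p^N\mathbb{Z}_p$.
   Context: $\mathbb{Q}_p$ is the field of $p$-adic numbers, $\mathbb{Z}_p=\{x\in\mathbb{Q}_p:|x|_p\le1\}$, and $a+p^N\mathbb{Z}_p=\{a+p^Nz:z\in\mathbb{Z}_p\}$. $\Delta_h^{m}f(x)=\sum_{k=0}^{m}\binom{m}{k}(-1)^{m-k}f(x+kh)$. *)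

(* Defs.v *)
From Stdlib Require Import Reals.
From HB Require Import structures.
From mathcomp Require Import all_boot all_order all_algebra.
Set Implicit Arguments. Unset Strict Implicit. Unset Printing Implicit Defensive.
Import Order.TTheory GRing.Theory Num.Theory.
Local Open Scope ring_scope.

(* The p-adic absolute value on Q:  |0|_p = 0,
   |q|_p = p^(v_p(denq q)) / p^(v_p(numq q)) = p^(-v_p(q)) for q <> 0. *)
Definition padic_abs (p : nat) (q : rat) : R :=
  if q == 0 then R0
  else Rdiv (pow (INR p) (logn p `|denq q|%N)) (pow (INR p) (logn p `|numq q|%N)).

Definition is_absolute_value (F : fieldType) (absF : F -> R) : Prop :=
  (forall x : F, Rle R0 (absF x)) /\
  (forall x : F, absF x = R0 <-> x = 0) /\
  (forall x y : F, absF (x * y) = Rmult (absF x) (absF y)) /\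
  (forall x y : F, Rle (absF (x + y)) (Rplus (absF x) (absF y))).

Definition abs_continuous (A B : zmodType) (absA : A -> R) (absB : B -> R)
    (g : A -> B) : Prop :=
  forall (x : A) (eps : R), Rlt R0 eps ->
    exists delta : R, Rlt R0 delta /\
      forall y : A, Rlt (absA (y - x)) delta -> Rlt (absB (g y - g x)) eps.

Definition abs_cauchy (A : zmodType) (absA : A -> R) (u : nat -> A) : Prop :=
  forall eps : R, Rlt R0 eps -> exists M : nat,
    forall m k : nat, (M <= m)%N -> (M <= k)%N -> Rlt (absA (u m - u k)) eps.

Definition abs_converges_to (A : zmodType) (absA : A -> R) (u : nat -> A) (l : A) : Prop :=
  forall eps : R, Rlt R0 eps -> exists M : nat,
    forall m : nat, (M <= m)%N -> Rlt (absA (u m - l)) eps.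

(* (F, absF) is (a model of) the field Q_p of p-adic numbers: a valued field
   which is the completion of (Q, |.|_p), i.e. Q embeds isometrically
   (via the canonical map ratr), F is complete, and Q is dense in F.
   This characterizes Q_p up to unique isometric isomorphism. *)
Definition is_Qp (p : nat) (F : fieldType) (absF : F -> R) : Prop :=
  is_absolute_value absF /\
  (forall q : rat, absF (ratr q) = padic_abs p q) /\
  (forall u : nat -> F, abs_cauchy absF u -> exists l : F, abs_converges_to absF u l) /\
  (forall (x : F) (eps : R), Rlt R0 eps -> exists q : rat, Rlt (absF (x - ratr q)) eps).

Definition fdiff (A : zmodType) (B : pzRingType) (h : A) (m : nat) (f : A -> B) (x : A) : B :=
  \sum_(k < m.+1) ('C(m, k))%:R * (-1) ^+ (m - k) * f (x + h *+ k).

(* Main.v *)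
Require Import Defs.
From Stdlib Require Import Reals Lra Psatz.
From HB Require Import structures.
From mathcomp Require Import all_boot all_order all_algebra.
Import Order.TTheory GRing.Theory Num.Theory.
Set Implicit Arguments. Unset Strict Implicit.
Delimit Scope ring_scope with ring.
Delimit Scope R_scope with R.
Local Open Scope ring_scope.

Section AbsLemmas.
Variable F : fieldType.
Variable absF : F -> R.
Hypothesis HA : is_absolute_value absF.
Local Open Scope R_scope.

Lemma abs_ge0 x : Rle R0 (absF x). Proof. by case: HA. Qed.
Lemma abs_eq0 x : absF x = R0 <-> x = 0%ring. Proof. by case: HA => _ []. Qed.
Lemma absM x y : absF (x * y)%ring = Rmult (absF x) (absF y). Proof. by case: HA => _ [] _ []. Qed.
Lemma absD x y : Rle (absF (x + y)%ring) (Rplus (absF x) (absF y)). Proof. by case: HA => _ [] _ []. Qed.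
Lemma abs0 : absF 0%ring = R0. Proof. by apply/abs_eq0. Qed.
Lemma abs1 : absF 1%ring = R1.
Proof.
have h := absM 1 1. rewrite GRing.mulr1 in h.
have h0 : absF 1%ring <> R0 by move/abs_eq0; apply/eqP; exact: GRing.oner_neq0.
have := abs_ge0 1%ring. nra.
Qed.
Lemma absN x : absF (- x)%ring = absF x.
Proof.
have h := absM (-1) (-1). rewrite GRing.mulrNN GRing.mulr1 abs1 in h.
have h2 : absF (-1)%ring = R1 by have := abs_ge0 (-1)%ring; nra.
by rewrite -GRing.mulN1r absM h2 Rmult_1_l.
Qed.
Lemma abs_subC x y : absF (x - y)%ring = absF (y - x)%ring.
Proof. by rewrite -absN GRing.opprB. Qed.
Lemma absX x n : absF (x ^+ n)%ring = pow (absF x) n.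
Proof. elim: n => [|n IH]; first by rewrite GRing.expr0 abs1.
by rewrite GRing.exprS absM IH. Qed.

Definition cont_at (g : F -> F) (x : F) := forall eps, Rlt R0 eps -> exists d, Rlt R0 d /\
  forall y, Rlt (absF (y - x)%ring) d -> Rlt (absF (g y - g x)%ring) eps.

Lemma cont_const c x : cont_at (fun _ => c) x.
Proof. move=> e he; exists R1; split; first lra. move=> y _; rewrite GRing.subrr abs0; lra. Qed.
Lemma cont_id x : cont_at id x.
Proof. move=> e he; exists e; split => //. Qed.
Lemma cont_add g1 g2 x : cont_at g1 x -> cont_at g2 x -> cont_at (fun y => g1 y + g2 y)%ring x.
Proof.
move=> c1 c2 e he.
have he2 : Rlt R0 (e/2) by lra.
have [d1 [hd1 H1]] := c1 _ he2; have [d2 [hd2 H2]] := c2 _ he2.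
exists (Rmin d1 d2); split; first by apply Rmin_glb_lt.
move=> y hy.
have e1 := H1 y (Rlt_le_trans _ _ _ hy (Rmin_l _ _)).
have e2 := H2 y (Rlt_le_trans _ _ _ hy (Rmin_r _ _)).
have -> : (g1 y + g2 y - (g1 x + g2 x) = (g1 y - g1 x) + (g2 y - g2 x))%ring.
  by rewrite GRing.opprD GRing.addrACA.
have := absD (g1 y - g1 x)%ring (g2 y - g2 x)%ring. lra.
Qed.
Lemma cont_mul g1 g2 x : cont_at g1 x -> cont_at g2 x -> cont_at (fun y => g1 y * g2 y)%ring x.
Proof.
move=> c1 c2 e he.
have hA := abs_ge0 (g1 x); have hB := abs_ge0 (g2 x).
move: hA hB; set A := absF (g1 x); set B := absF (g2 x); move=> hA hB.
set e' := Rmin 1 (e / (2 * (A + B + 1))).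
have he' : Rlt R0 e'.
  apply Rmin_glb_lt; first lra. apply Rdiv_lt_0_compat => //; lra.
have he'1 : Rle e' 1 by apply Rmin_l.
have he'2 : Rle (e' * (A + B + 1)) (e / 2).
  have : Rle e' (e / (2 * (A + B + 1))) by apply Rmin_r.
  move=> h. have hp : Rlt 0 (A + B + 1) by lra.
  have -> : (e / 2 = (e / (2 * (A + B + 1))) * (A + B + 1))%R by field; lra.
  apply Rmult_le_compat_r; lra.
have [d1 [hd1 H1]] := c1 _ he'; have [d2 [hd2 H2]] := c2 _ he'.
exists (Rmin d1 d2); split; first by apply Rmin_glb_lt.
move=> y hy.
have e1 := H1 y (Rlt_le_trans _ _ _ hy (Rmin_l _ _)).
have e2 := H2 y (Rlt_le_trans _ _ _ hy (Rmin_r _ _)).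
have -> : (g1 y * g2 y - g1 x * g2 x = (g1 y - g1 x) * (g2 y - g2 x) + (g1 y - g1 x) * g2 x + g1 x * (g2 y - g2 x))%ring.
  by rewrite -GRing.mulrDr GRing.subrK GRing.mulrBl GRing.mulrBr GRing.addrA GRing.subrK.
apply: (Rle_lt_trans _ _ _ (absD _ _)).
apply: (Rle_lt_trans _ _ _ (Rplus_le_compat_r _ _ _ (absD _ _))).
rewrite !absM -/A -/B.
have p1 := abs_ge0 (g1 y - g1 x)%ring; have p2 := abs_ge0 (g2 y - g2 x)%ring.
have : Rle (absF (g1 y - g1 x)%ring * absF (g2 y - g2 x)%ring)%R (e' * e')%R by apply Rmult_le_compat; lra.
have : Rle (absF (g1 y - g1 x)%ring * B)%R (e' * B)%R by apply Rmult_le_compat_r; lra.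
have : Rle (A * absF (g2 y - g2 x)%ring)%R (A * e')%R by apply Rmult_le_compat_l; lra.
have : e' * e' <= e' * 1 by apply Rmult_le_compat_l; lra.
move=> q1 q2 q3 q4. clearbody e'. clearbody A B. lra.
Qed.

Lemma cont_ext g h x : (forall y, g y = h y) -> cont_at g x -> cont_at h x.
Proof. move=> E c e he; have [d [hd H]] := c e he; exists d; split=> // y hy; rewrite -!E; exact: H. Qed.

Lemma cont_horner (P : {poly F}) x : cont_at (fun y => P.[y])%ring x.
Proof.
elim/poly_ind: P => [|P c IH].
  apply: (@cont_ext (fun _ => 0%ring)); first by move=> y; rewrite horner0. exact: cont_const.
apply: (@cont_ext (fun y => P.[y] * y + c)%ring).
  by move=> y; rewrite hornerMXaddC.
apply: cont_add; last exact: cont_const.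
apply: cont_mul => //. exact: cont_id.
Qed.

End AbsLemmas.


Section Diff.
Variable K : comNzRingType.
Definition Dseq (s : nat -> K) : nat -> K := fun k => s k.+1 - s k.

Lemma iterD_sum m (s : nat -> K) k :
  iter m Dseq s k = \sum_(j < m.+1) ('C(m, j))%:R * (-1) ^+ (m - j) * s (k + j)%N.
Proof.
elim: m k => [|m IH] k.
  by rewrite big_ord_recl big_ord0 /= addr0 bin0 addn0 mul1r expr0 mul1r.
rewrite iterS /Dseq IH IH.
rewrite [in RHS]big_ord_recl /= bin0 subn0 mul1r addn0.
under [in RHS]eq_bigr => j _ do rewrite /bump /= add1n binS subSS natrD !mulrDl addnS.
rewrite big_split /=.
under eq_bigr => j _ do rewrite addSn.
set A := (\sum_(j < m.+1) _ * s (k + j).+1).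
set B := (\sum_(j < m.+1) _ * s (k + j)%N).
set S1 := (\sum_(i < m.+1) 'C(m, i.+1)%:R * _ * _).
suff -> : - B = (-1) ^+ m.+1 * s k + S1.
  by rewrite [A + _]addrC -addrA.
rewrite /B /S1 big_ord_recl /=. rewrite subn0. rewrite addn0 bin0 mul1r.
rewrite [in RHS]big_ord_recr /= bin_small // mulr0n !mul0r addr0.
rewrite opprD exprS mulN1r mulNr; congr (_ + _).
rewrite -sumrN; apply: eq_bigr => j _ /=.
rewrite /bump /= add1n addnS.
have hj : (j < m)%N by [].
by rewrite -[(m - j)%N](subnSK hj) exprS !mulN1r mulrN mulNr.
Qed.


Lemma newton k M (s : nat -> K) : (k < M)%N ->
  s k = \sum_(j < M) ('C(k, j))%:R * iter j Dseq s 0%N.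
Proof.
elim: k M s => [|k IH] [|M] s //= hk.
  rewrite big_ord_recl /= bin0 mul1r big1 ?addr0 // => j _.
  by rewrite bin0n /= mul0r.
have e : s k.+1 = s k + Dseq s k by rewrite /Dseq addrC subrK.
rewrite e (IH M.+1 s) ?(ltnW hk) // (IH M.+1 (Dseq s)) ?(ltnW hk) //.
rewrite [X in X + _]big_ord_recl [in RHS]big_ord_recl /= !bin0.
under [X in _ + X = _]eq_bigr => j _ do rewrite -iterSr.
rewrite [X in _ + X = _]big_ord_recr /= bin_small // mulr0n mul0r addr0.
rewrite -addrA -big_split /=; congr (_ + _); apply: eq_bigr => j _.
by rewrite /bump /= add1n binS natrD mulrDl addrC.
Qed.
End Diff.

Lemma iterDC (T : Type) a b (f : T -> T) x : iter (a + b) f x = iter b f (iter a f x).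
Proof. by rewrite addnC iterD. Qed.

Section Interp.
Variable K : fieldType.
Hypothesis charK : forall m, (0 < m)%N -> (m%:R : K) != 0.

Lemma prodX_horner j k :
  (\prod_(0 <= i < j) ('X - (i%:R : K)%:P))%ring.[k%:R] = (k ^_ j)%:R.
Proof.
elim: j => [|j IH]; first by rewrite big_nil hornerC ffactn0.
rewrite big_nat_recr //= hornerM IH hornerXsubC ffactnSr.
case: (leqP j k) => hjk; first by rewrite natrM natrB.
by rewrite ffact_small // mul0r.
Qed.

Lemma size_prodX j : (size (\prod_(0 <= i < j) ('X - (i%:R : K)%:P))%ring <= j.+1)%N.
Proof.
elim: j => [|j IH]; first by rewrite big_nil size_poly1.
rewrite big_nat_recr //=.
apply: leq_trans (size_mul_leq _ _) _.
rewrite size_XsubC addn2 /=. by [].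
Qed.

Definition bp j : {poly K} := (j`!%:R)^-1 *: \prod_(0 <= i < j) ('X - (i%:R : K)%:P).

Lemma bp_size j : (size (bp j) <= j.+1)%N.
Proof. exact: leq_trans (size_scale_leq _ _) (size_prodX j). Qed.

Lemma bp_horner j k : (bp j).[k%:R] = ('C(k, j))%:R.
Proof.
rewrite hornerZ prodX_horner -bin_ffact natrM mulrC mulrK //.
by rewrite unitfE charK // fact_gt0.
Qed.

Lemma iter_zero j (t : nat -> K) : (forall k, t k = 0) -> forall k, iter j (@Dseq K) t k = 0.
Proof.
elim: j t => [|j IH] t ht k //=.
by rewrite /Dseq !IH // subrr.
Qed.

Lemma poly_interp (s : nat -> K) n (Hs : forall k, iter n.+1 (@Dseq K) s k = 0) :
  exists P0 : {poly K}, (size P0 <= n.+1)%N /\ forall k, s k = P0.[k%:R].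
Proof.
exists (\sum_(j < n.+1) iter j (@Dseq K) s 0%N *: bp j); split.
  apply: (big_ind (fun p : {poly K} => size p <= n.+1)%N).
  - by rewrite size_poly0.
  - by move=> p q hp hq; apply: leq_trans (size_add _ _) _; rewrite geq_max hp hq.
  move=> j _; apply: leq_trans (size_scale_leq _ _) _.
  exact: leq_trans (bp_size j) (ltn_ord j).
move=> k.
rewrite (@newton K k (n.+1 + k.+1)) ?ltn_addl // big_split_ord /=.
rewrite [X in _ + X]big1 ?addr0; last first.
  move=> j _ /=. have h := @iter_zero j _ Hs 0%N. rewrite -iterDC /= in h. by rewrite h mulr0.
rewrite (@horner_sum K); apply: eq_bigr => j _.
by rewrite hornerZ bp_horner mulrC.
Qed.
End Interp.

From mathcomp Require Import ring.

Section Qp.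
Variable p : nat.
Hypothesis Hp : prime p.
Variable Qp : fieldType.
Variable absQ : Qp -> R.
Hypothesis HQp : is_Qp p absQ.

Lemma HA : is_absolute_value absQ. Proof. by case: HQp. Qed.

Lemma INRp_gt1 : Rlt 1%R (INR p).
Proof. have := prime_gt1 Hp. move/ssrnat.ltP => h. apply: (lt_1_INR _ h). Qed.

Lemma pow_pos' L : Rlt 0%R (pow (INR p) L).
Proof. apply: pow_lt. have := INRp_gt1. lra. Qed.

Lemma padic_int (w : int) : padic_abs p (w%:~R) =
  if w == 0 then R0 else Rdiv 1%R (pow (INR p) (logn p `|w|%N)).
Proof.
rewrite /padic_abs numq_int denq_int intr_eq0.
by case: (w == 0) => //; rewrite logn1.
Qed.

Lemma absQ_int (w : int) : absQ (w%:~R) = padic_abs p (w%:~R).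
Proof. by case: HQp => _ [h _]; rewrite -h ratr_int. Qed.

Lemma absQ_int_le1 (w : int) : Rle (absQ (w%:~R)) 1%R.
Proof.
rewrite absQ_int padic_int; case: (w == 0); first lra.
have h := pow_pos' (logn p `|w|%N).
have : Rle 1%R (pow (INR p) (logn p `|w|%N)) by apply: pow_R1_Rle; have := INRp_gt1; lra.
move=> h1. rewrite /Rdiv Rmult_1_l. rewrite -[X in Rle _ X]Rinv_1. apply Rinv_le_contravar; lra.
Qed.

Lemma intQ_neq0 (w : int) : w != 0 -> (w%:~R : Qp) != 0.
Proof.
move=> hw; apply/eqP => h.
have : absQ (w%:~R) = R0 by rewrite h; exact: (abs0 HA).
rewrite absQ_int padic_int (negbTE hw).
have := pow_pos' (logn p `|w|%N). move=> h1 h2.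
have : Rlt 0%R (Rdiv 1%R (pow (INR p) (logn p `|w|%N))) by apply Rdiv_lt_0_compat; lra.
lra.
Qed.

Lemma natQ_neq0 m : (0 < m)%N -> (m%:R : Qp) != 0.
Proof. move=> hm; rewrite pmulrn; apply: intQ_neq0; by rewrite -lt0n. Qed.


Lemma INR_le_pow M : Rle (INR M) (pow (INR p) M).
Proof.
have hp := INRp_gt1.
have hp2 : Rle 2%R (INR p).
  have := prime_gt1 Hp => /ssrnat.ltP /le_INR. by rewrite /=.
elim: M => [|M IH]; first by simpl; exact Rle_0_1.
rewrite S_INR /=.
have h1 : Rle 1%R (pow (INR p) M) by apply pow_R1_Rle; lra.
nra.
Qed.

Lemma density z : Rle (absQ z) 1%R -> forall d, Rlt 0%R d ->
  exists k : nat, Rlt (absQ (k%:R - z)) d.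
Proof.
move=> hz d hd.
have [_ [Hrat [_ Hdense]]] := HQp.
have hA := HA.
set e1 := Rmin (1/2)%R (d/2)%R.
have he1 : Rlt 0%R e1 by apply Rmin_glb_lt; lra.
have he1a : Rle e1 (1/2)%R by apply Rmin_l.
have he1b : Rle e1 (d/2)%R by apply Rmin_r.
clearbody e1.
have [q hq] := Hdense z e1 he1.
have hq2 : Rlt (absQ (ratr q)) (3/2)%R.
  have e : ratr q = z + (ratr q - z) by rewrite addrC subrK.
  rewrite e. apply: Rle_lt_trans (absD hA _ _) _.
  rewrite (abs_subC hA (ratr q)).
  apply: Rlt_le_trans (Rplus_le_lt_compat _ _ _ _ hz (Rlt_le_trans _ _ _ hq he1a)) _; lra.
have hden : ~~ (p %| `|denq q|%N)%N.
  apply/negP => hpd.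
  have hq0 : q != 0.
    apply/eqP => q0; move: hpd; rewrite q0 /=. rewrite dvdn1. move=> /eqP hp1.
    by move: (prime_gt1 Hp); rewrite hp1.
  have hnum : ~~ (p %| `|numq q|%N)%N.
    apply/negP => hpn.
    have := coprime_num_den q. rewrite /coprime => /eqP hg.
    have : (p %| gcdn `|numq q| `|denq q|)%N by rewrite dvdn_gcd hpn hpd.
    rewrite hg dvdn1 => /eqP hp1. by move: (prime_gt1 Hp); rewrite hp1.
  move: hq2. rewrite Hrat /padic_abs (negbTE hq0).
  rewrite (@logn_coprime p `|numq q|%N); last by rewrite prime_coprime.
  have hL : (1 <= logn p `|denq q|)%N.
    rewrite -pfactor_dvdn ?expn1 //. by rewrite absz_gt0 denq_neq0.
  rewrite /= /Rdiv Rinv_1 Rmult_1_r.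
  have := Rle_pow (INR p) 1 _ (ltac:(have := INRp_gt1; lra)) (ssrnat.leP hL).
  rewrite /= Rmult_1_r.
  have := INRp_gt1. 
  have : Rle 2%R (INR p) by have := prime_gt1 Hp => /ssrnat.ltP /le_INR; rewrite /=.
  lra.
set u := numq q; set dn := `|denq q|%N.
have hdn : (0 < dn)%N by rewrite /dn absz_gt0 denq_neq0.
have hdenq : denq q = dn%:Z by rewrite /dn gez0_abs // ltW // denq_gt0.
have [M [hM hM0]] := archimed_cor1 (d/2)%R (ltac:(lra)).
set PM := (p ^ M)%N.
have hPM : (0 < PM)%N by rewrite expn_gt0 prime_gt0.
have [a _ ha] := Bezoutl dn hPM.
have hcop : coprime PM dn by apply: coprimeXl; rewrite prime_coprime.
move: ha; rewrite (eqP hcop) => /dvdnP [c hc].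
set k := `|((- u * a%:Z) %% PM%:Z)%Z|%N.
have hPMz : (PM%:Z != 0) by rewrite eqz_nat -lt0n hPM.
have hk : (k%:Z = ((- u * a%:Z) %% PM%:Z)%Z) by rewrite /k gez0_abs // modz_ge0.
set t := ((- u * a%:Z) %/ PM%:Z)%Z.
have hdiv := divz_eq (- u * a%:Z) PM%:Z. rewrite -/t -hk in hdiv.
have hcz : ((1 + a * dn)%N%:Z = c%:Z * PM%:Z).
  by rewrite hc PoszM.
set w := u - k%:Z * dn%:Z.
have hw : w = (u * c%:Z + t * dn%:Z) * PM%:Z.
  apply/eqP; rewrite -subr_eq0.
  have hk2 : k%:Z = - u * a%:Z - t * PM%:Z by rewrite hdiv addrC addKr.
  rewrite /w hk2.
  have -> : u - (- u * a%:Z - t * PM%:Z) * dn%:Z - (u * c%:Z + t * dn%:Z) * PM%:Z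
     = u * ((1 + a * dn)%N%:Z - c%:Z * PM%:Z).
    rewrite PoszD PoszM. ring.
  by rewrite hcz subrr mulr0.
have hdnQ : (dn%:R : Qp) != 0 := natQ_neq0 hdn.
have hratr : ratr q = u%:~R / dn%:R :> Qp by rewrite /ratr -/u hdenq -pmulrn.
have hkq : (ratr q - k%:R) * dn%:R = (w%:~R : Qp).
  by rewrite hratr /w intrB intrM -!pmulrn mulrBl divfK.
have habs_dn : absQ (dn%:R) = 1%R.
  have hdn0 : (dn%:Z == 0) = false by apply/negbTE; rewrite eqz_nat -lt0n.
  rewrite pmulrn absQ_int padic_int hdn0 absz_nat.
  rewrite (@logn_coprime p dn); last by rewrite prime_coprime.
  by rewrite /= /Rdiv Rinv_1 Rmult_1_r.
have hwabs : Rlt (absQ (w%:~R)) (d/2)%R.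
  rewrite absQ_int padic_int; case: eqP => hw0; first lra.
  have hwpos : (0 < `|w|)%N by rewrite absz_gt0; apply/eqP.
  have hL : (M <= logn p `|w|)%N.
    rewrite -pfactor_dvdn // hw abszM absz_nat. exact: dvdn_mull.
  have h1 := Rle_pow (INR p) M _ (ltac:(have := INRp_gt1; lra)) (ssrnat.leP hL).
  have h2 := INR_le_pow M.
  have h3 : Rlt 0%R (INR M) by apply lt_0_INR.
  apply: Rle_lt_trans hM.
  rewrite /Rdiv Rmult_1_l. apply Rinv_le_contravar => //. lra.
have hmain : Rlt (absQ (ratr q - k%:R)) (d/2)%R.
  move: hwabs; rewrite -hkq (absM hA) habs_dn Rmult_1_r. done.
have e : k%:R - z = - (ratr q - k%:R) + (ratr q - z) by rewrite opprB addrA subrK.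
exists k.
apply: (Rle_lt_trans _ (absQ (- (ratr q - k%:R) + (ratr q - z)))).
  apply: Req_le; congr absQ; exact: e.
apply: Rle_lt_trans (absD hA _ _) _. rewrite (absN hA) (abs_subC hA (ratr q)).
rewrite (abs_subC hA (k%:R) (ratr q)) (abs_subC hA (ratr q) z).
apply: Rlt_le_trans (Rplus_lt_compat _ _ _ _ hmain hq) _. lra.
Qed.

End Qp.


Theorem corollary7 (p : nat) (Hp : prime p)
    (Qp : fieldType) (absQ : Qp -> R) (HQp : is_Qp p absQ)
    (K : fieldType) (absK : K -> R) (HK : is_absolute_value absK)
    (iota : {rmorphism Qp -> K}) (Hiota : abs_continuous absQ absK iota)
    (f : Qp -> K) (Hf : abs_continuous absQ absK f) (n N : nat)
    (HD : forall x : Qp, fdiff ((p%:R : Qp) ^+ N) n.+1 f x = 0) :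
  forall a : Qp, exists c : 'I_n.+1 -> K,
    forall z : Qp, Rle (absQ z) R1 ->
      f (a + (p%:R : Qp) ^+ N * z) = \sum_(i < n.+1) c i * (iota (a + (p%:R : Qp) ^+ N * z)) ^+ i.
Proof.
move=> a.
have hA := HA HQp.
set h := (p%:R : Qp) ^+ N.
have charK : forall m, (0 < m)%N -> (m%:R : K) != 0.
  by move=> m hm; rewrite -(rmorph_nat iota) fmorph_eq0 (natQ_neq0 Hp HQp hm).
have hh0 : h != 0 by rewrite expf_neq0 // (natQ_neq0 Hp HQp (prime_gt0 Hp)).
set s := fun k => f (a + h *+ k).
have Hs : forall k, iter n.+1 (@Dseq K) s k = 0.
  move=> k; rewrite iterD_sum -[RHS](HD (a + h *+ k)) /fdiff.
  by apply: eq_bigr => j _; rewrite /s mulrnDr addrA.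
have [P0 [hsz hP0]] := @poly_interp K charK s n Hs.
set ih := iota h; set ia := iota a.
have hih : ih != 0 by rewrite /ih fmorph_eq0.
set P := P0 \Po (ih^-1 *: ('X - ia%:P)).
have Hpoly : forall k, f (a + h *+ k) = P.[iota (a + h *+ k)].
  move=> k; rewrite -/(s k) (hP0 k) /P horner_comp hornerZ hornerXsubC.
  congr (P0.[_]).
  by rewrite rmorphD rmorphMn -/ih -/ia addrAC subrr add0r -[ih *+ k]mulr_natr mulKf.
have hPsz : (size P <= n.+1)%N.
  apply: leq_trans (size_comp_poly_leq _ _) _.
  have hq : ((size (ih^-1 *: ('X - ia%:P))).-1 <= 1)%N.
    have := size_scale_leq (ih^-1) ('X - ia%:P); rewrite size_XsubC.
    by case: (size _) => // [[|[|]]].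
  have := leq_mul (leqnn (size P0).-1) hq. rewrite muln1 => hm.
  apply: leq_trans (_ : (size P0).-1.+1 <= n.+1)%N; first by [].
  by case: (size P0) hsz.
exists (fun i => P`_i) => z hz.
rewrite -horner_coef_wide //.
set x0 := a + h * z.
have hhabs : Rle (absQ h) 1%R.
  have hp1 : Rle (absQ (p%:R : Qp)) 1%R.
    have := absQ_int_le1 Hp HQp (p%:Z). by rewrite -pmulrn.
  have hp0 := abs_ge0 hA (p%:R : Qp).
  rewrite /h (absX hA). move: hp1 hp0. generalize (absQ (p%:R : Qp)) => r hr1 hr0.
  clear -hr1 hr0. elim: N => [|N' IH] /=; first lra.
  have : Rle 0%R (pow r N') by apply pow_le. nra.
apply/eqP; rewrite -subr_eq0; apply/eqP; apply/(abs_eq0 HK).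
set v := absK (f x0 - P.[iota x0]).
have hv0 := abs_ge0 HK (f x0 - P.[iota x0]).
case: (Rle_lt_or_eq_dec _ _ hv0) => [hv|hv]; last by rewrite /v -hv.
exfalso.
have he : Rlt 0%R (v/2)%R by apply Rdiv_lt_0_compat; [exact hv | lra].
have [df [hdf Hdf]] := Hf x0 _ he.
have [dP [hdP HdP]] := cont_horner HK P (iota x0) he.
have [di [hdi Hdi]] := Hiota x0 _ hdP.
have hd : Rlt 0%R (Rmin df di) by apply Rmin_glb_lt.
have [k hk] := density Hp HQp hz hd.
set xk := a + h *+ k.
have hxk : Rlt (absQ (xk - x0)) (Rmin df di).
  have -> : xk - x0 = h * (k%:R - z) by rewrite /xk /x0 mulrBr mulr_natr opprD addrACA subrr add0r.
  rewrite (absM hA). have := abs_ge0 hA (k%:R - z). nra.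
have h1 := Hdf xk (Rlt_le_trans _ _ _ hxk (Rmin_l _ _)).
have h2 := HdP (iota xk) (Hdi xk (Rlt_le_trans _ _ _ hxk (Rmin_r _ _))).
have e : f x0 - P.[iota x0] = - (f xk - f x0) + (P.[iota xk] - P.[iota x0]).
  by rewrite -Hpoly opprB addrA subrK.
have := absD HK (- (f xk - f x0)) (P.[iota xk] - P.[iota x0]).
rewrite -e (absN HK) -/v. move: h1 h2. clearbody v. move=> a1 a2 a3. have := Rle_lt_trans _ _ _ a3 (Rplus_lt_compat _ _ _ _ a1 a2). lra.
Qed.
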